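(* Let $R\ge1$ and let $\mathbb{G}_1,\dots,\mathbb{G}_R$ be linear arrays with central ULAs $\mathbb{U}_{\mathbb{G}_1},\dots,\mathbb{U}_{\mathbb{G}_R}$ of their difference coarrays. Let $\mathbb{M}_r$ be the multi-generator fractal array built from them, $\mathbb{D}_r$ its difference coarray, $\mathbb{U}_r$ the central ULA of $\mathbb{D}_r$, $N=|\mathbb{M}_r|$ (so $N\le\prod_{i=1}^r|\mathbb{G}_i|$), and $P_r=\prod_{i=1}^r|\mathbb{U}_{\mathbb{G}_i}|$. Then for every $1\le r\le R$, $\left[-\tfrac{P_r-1}{2},\tfrac{P_r-1}{2}\right]\cap\mathbb{Z}\subseteq\mathbb{U}_r$, so $|\mathbb{D}_r|\ge|\mathbb{U}_r|\ge P_r$. Consequently, if there is a constant $c>0$ with $|\mathbb{U}_{\mathbb{G}_i}|\ge c|\mathbb{G}_i|^2$ for all $i$, then $|\mathbb{D}_r|\ge c^rN^2$, i.e. $|\mathbb{D}_r|$ is of order $N^2$ for fixed $r$.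
   Context: A linear array is a finite set $\mathbb{G}\subset\mathbb{Z}$ with $\min\mathbb{G}=0$; its difference coarray is $\mathbb{D}=\{n_1-n_2:n_1,n_2\in\mathbb{G}\}$; its central ULA is the largest set $\{-m,\dots,m\}$ ($m\ge0$) contained in $\mathbb{D}$. Given generators $\mathbb{G}_1,\dots,\mathbb{G}_R$ with central ULAs $\mathbb{U}_{\mathbb{G}_i}$, the multi-generator fractal array is defined by $\mathbb{M}_0=\{0\}$ and $\mathbb{M}_{r+1}=\bigcup_{n\in\mathbb{G}_{r+1}}\big(\mathbb{M}_r+n\prod_{i=1}^{r}|\mathbb{U}_{\mathbb{G}_i}|\big)$ for $0\le r\le R-1$ (empty product $=1$), where $A+t=\{a+t:a\in A\}$. *)

(* Defs.v *)
(* Finite subsets of Z are represented as seq int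
   (membership = \in, cardinality = size of undup). *)
From HB Require Import structures.
From mathcomp Require Import all_boot all_order all_algebra.
Set Implicit Arguments. Unset Strict Implicit. Unset Printing Implicit Defensive.
Import Order.TTheory GRing.Theory Num.Theory.

Definition card_set (A : seq int) : nat := size (undup A).

Definition linear_array (G : seq int) : bool :=
  (0%R \in G) && all (fun n : int => (0 <= n)%R) G.

Definition coarray (G : seq int) : seq int :=
  undup [seq (n1 - n2)%R | n1 <- G, n2 <- G].

Definition segment (m : nat) : seq int :=
  [seq (i%:Z - m%:Z)%R | i <- iota 0 (2 * m + 1)].

Definition ula_ok (D : seq int) (m : nat) : bool := all (fun j => j \in D) (segment m).

(* radius m of the largest {-m..m} contained in D (a contained segment has at most
   size D elements, so m < size D + 1 is no restriction) *)
Definition ula_rad (D : seq int) : nat := \max_(m < (size D).+1 | ula_ok D m) m.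

Definition central_ula (D : seq int) : seq int := segment (ula_rad D).

(* P_r = prod_{i=1}^r |U_{G_i}|; generator G_{i+1} is Gs i *)
Definition Pprod (Gs : nat -> seq int) (r : nat) : nat :=
  \prod_(i < r) card_set (central_ula (coarray (Gs i))).

Fixpoint fractal (Gs : nat -> seq int) (r : nat) : seq int :=
  match r with
  | 0 => [:: 0%R]
  | r'.+1 => undup (flatten [seq [seq (x + n * (Pprod Gs r')%:Z)%R | x <- fractal Gs r']
                            | n <- Gs r'])
  end.

(* Main.v *)
Require Import Defs.
From HB Require Import structures.
From mathcomp Require Import all_boot all_order all_algebra.
From mathcomp Require Import zify.
Import Order.TTheory GRing.Theory Num.Theory.

Lemma mem_segment m (k : int) : (k \in segment m) = (`|k| <= m)%N.
Proof.
apply/idP/idP.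
- by case/mapP=> i; rewrite mem_iota => /andP[_ hi] ->; lia.
- move=> h; apply/mapP; exists (absz (k + (Posz m))%R); [rewrite mem_iota; lia | lia].
Qed.

Lemma uniq_segment m : uniq (segment m).
Proof.
rewrite map_inj_uniq ?iota_uniq // => i j h; lia.
Qed.

Lemma card_segment m : card_set (segment m) = (2 * m + 1)%N.
Proof. by rewrite /card_set undup_id ?uniq_segment // size_map size_iota. Qed.

Lemma coarray_elim G x : x \in coarray G ->
  exists a b, [/\ a \in G, b \in G & x = (a - b)%R].
Proof. by rewrite mem_undup => /allpairsP [[a b] /= [ha hb ->]]; exists a, b. Qed.

Lemma coarray_intro G a b : a \in G -> b \in G -> (a - b)%R \in coarray G.
Proof. by move=> ha hb; rewrite mem_undup; apply/allpairsP; exists (a, b). Qed.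

Lemma ula_okP D m : ula_ok D m <-> (forall k : int, (`|k| <= m)%N -> k \in D).
Proof.
split.
- by move=> /allP h k hk; apply: h; rewrite mem_segment.
- by move=> h; apply/allP => k; rewrite mem_segment; apply: h.
Qed.

Lemma ula_rad_ge D m : uniq D -> ula_ok D m -> (m <= ula_rad D)%N.
Proof.
move=> uD hok.
have hs : (size (segment m) <= size D)%N.
  apply: uniq_leq_size; first exact: uniq_segment.
  by move=> k; rewrite mem_segment; move/ula_okP: hok; apply.
rewrite size_map size_iota in hs.
have hm : (m < (size D).+1)%N by lia.
exact: (@leq_bigmax_cond _ (fun i : 'I_(size D).+1 => ula_ok D i)
          (fun i => nat_of_ord i) (Ordinal hm)).
Qed.

Lemma ula_ok0 D : (0%R : int) \in D -> ula_ok D 0.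
Proof.
move=> h; apply/ula_okP => k hk; have -> : k = 0%R by lia. done.
Qed.

Lemma ula_ok_rad D : (0%R : int) \in D -> ula_ok D (ula_rad D).
Proof.
move=> h0; rewrite /ula_rad.
apply: (big_ind (fun x => ula_ok D x)); first exact: ula_ok0.
- by move=> x y hx hy; rewrite /maxn; case: ifP.
- by [].
Qed.

Arguments ula_ok_rad {D}.

Lemma card_central D : card_set (central_ula D) = (2 * ula_rad D + 1)%N.
Proof. exact: card_segment. Qed.

Lemma card_central_le D : (0%R : int) \in D -> (card_set (central_ula D) <= card_set D)%N.
Proof.
move=> h0; rewrite /card_set (undup_id (uniq_segment _)).
apply: uniq_leq_size; first exact: uniq_segment.
move=> k; rewrite mem_segment mem_undup => hk.
by move: (ula_ok_rad h0) => /ula_okP; apply.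
Qed.

Lemma coarray0 G x : x \in G -> (0%R : int) \in coarray G.
Proof. by move=> h; rewrite -(subrr x); apply: coarray_intro. Qed.

Arguments coarray0 {G x}.

Lemma fractal_intro Gs r n a : n \in Gs r -> a \in fractal Gs r ->
  (a + n * (Posz (Pprod Gs r)))%R \in fractal Gs r.+1.
Proof.
move=> hn ha; rewrite /= mem_undup; apply/flattenP.
exists [seq (x + n * (Posz (Pprod Gs r)))%R | x <- fractal Gs r].
  by apply/mapP; exists n.
by apply/mapP; exists a.
Qed.

Lemma fractal0 Gs r : (forall i, (i < r)%N -> (0%R : int) \in Gs i) ->
  (0%R : int) \in fractal Gs r.
Proof.
elim: r => [|r IH] h; first by rewrite inE.
have -> : (0%R : int) = (0 + 0 * (Posz (Pprod Gs r)))%R by rewrite mul0r addr0.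
apply: fractal_intro; first exact: h.
by apply: IH => i hi; apply: h; lia.
Qed.

Arguments fractal0 {Gs r}.

Lemma uniq_fractal Gs r : uniq (fractal Gs r).
Proof. by case: r => [|r] //=; apply: undup_uniq. Qed.

Lemma size_flatten_const (T : Type) (s : seq T) (f : T -> seq int) n :
  (forall x, size (f x) = n) -> size (flatten (map f s)) = (size s * n)%N.
Proof. move=> h; elim: s => //= x s IH; rewrite size_cat IH h; lia. Qed.

Lemma size_fractalS Gs r :
  (size (fractal Gs r.+1) <= card_set (Gs r) * size (fractal Gs r))%N.
Proof.
rewrite /= /card_set.
set f := fun n => [seq (x + n * (Posz (Pprod Gs r)))%R | x <- fractal Gs r].
rewrite -(@size_flatten_const _ (undup (Gs r)) f) => [|x]; last by rewrite size_map.
apply: uniq_leq_size; first exact: undup_uniq.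
move=> x; rewrite mem_undup => /flattenP [l /mapP [n hn ->] hx].
by apply/flattenP; exists (f n) => //; apply/mapP; exists n; rewrite ?mem_undup.
Qed.

Lemma size_fractal_le Gs r :
  (size (fractal Gs r) <= \prod_(i < r) card_set (Gs i))%N.
Proof.
elim: r => [|r IH]; first by rewrite big_ord0.
rewrite big_ord_recr /=.
apply: leq_trans (size_fractalS Gs r) _.
rewrite mulnC; exact: leq_mul.
Qed.

Lemma Pprod_S Gs r :
  Pprod Gs r.+1 = (Pprod Gs r * (2 * ula_rad (coarray (Gs r)) + 1))%N.
Proof. by rewrite /Pprod big_ord_recr /= card_central. Qed.

Lemma Pprod_odd Gs r : exists p, Pprod Gs r = (2 * p + 1)%N.
Proof.
elim: r => [|r [p hp]]; first by exists 0%N; rewrite /Pprod big_ord0.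
rewrite Pprod_S hp; set m := ula_rad _.
exists (2 * p * m + p + m)%N; lia.
Qed.

Lemma balanced (k : int) (p m : nat) :
  (`|k| <= (2 * p + 1) * m + p)%N ->
  exists q s : int, [/\ k = (q * (Posz (2 * p + 1)%N) + s)%R, (`|q| <= m)%N & (`|s| <= p)%N].
Proof.
move=> hk.
set P : int := (Posz (2 * p + 1)%N).
have hP : (0 < P)%R by rewrite /P; lia.
set t : int := (k + (Posz p))%R.
have e := divz_eq t P.
have h1 := modz_ge0 t (lt0r_neq0 hP).
have h2 := ltz_pmod t hP.
set q := (t %/ P)%Z in e *; set s0 := (t %% P)%Z in e h1 h2 *.
exists q, (s0 - (Posz p))%R; split.
- rewrite /t in e; lia.
- rewrite /t /P in e h2 *; nia.
- rewrite /P in h2; lia.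
Qed.

Lemma main_mem Gs r : (forall i, (i < r)%N -> (0%R : int) \in Gs i) ->
  forall k : int, (2 * `|k| <= Pprod Gs r - 1)%N -> k \in coarray (fractal Gs r).
Proof.
elim: r => [|r IH] h0 k hk.
  rewrite /Pprod big_ord0 in hk; have -> : k = 0%R by lia.
  by apply: coarray0; rewrite inE.
have [p hp] := Pprod_odd Gs r.
rewrite Pprod_S hp in hk.
set m := ula_rad (coarray (Gs r)) in hk.
have [q [s [ek hq hs]]] := @balanced k p m ltac:(nia).
have G0 : (0%R : int) \in coarray (Gs r) by apply: coarray0; apply: h0.
have := ula_ok_rad G0 => /ula_okP /(_ q hq) /coarray_elim [g1 [g2 [hg1 hg2 eq]]].
have hsr : s \in coarray (fractal Gs r).
  by apply: IH => [i hi|]; [apply: h0; lia | rewrite hp; lia].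
case/coarray_elim: hsr => [a1 [a2 [ha1 ha2 es]]].
have -> : k = ((a1 + g1 * (Posz (Pprod Gs r))) - (a2 + g2 * (Posz (Pprod Gs r))))%R.
  rewrite hp ek eq es; lia.
by apply: coarray_intro; apply: fractal_intro.
Qed.

Theorem theorem9 (R : nat) (Gs : nat -> seq int) :
  (1 <= R)%N ->
  (forall i, (i < R)%N -> linear_array (Gs i)) ->
  forall r, (1 <= r <= R)%N ->
    let M := fractal Gs r in
    let D := coarray M in
    let U := central_ula D in
    let N := card_set M in
    let P := Pprod Gs r in
    [/\ (N <= \prod_(i < r) card_set (Gs i))%N,
        (forall k : int, (2 * `|k| <= P - 1)%N -> k \in U),
        (card_set D >= card_set U)%N,
        (card_set U >= P)%N &
        forall (F : realFieldType) (c : F), (0 < c)%R ->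
          (forall i, (i < R)%N ->
             (c * ((card_set (Gs i)) ^ 2)%:R <= (card_set (central_ula (coarray (Gs i))))%:R)%R) ->
          (c ^+ r * (N ^ 2)%:R <= (card_set D)%:R)%R].
Proof.
move=> _ hlin r /andP [hr1 hrR] M D U N P.
have h0 : forall i, (i < r)%N -> (0%R : int) \in Gs i.
  by move=> i hi; case/andP: (hlin i (leq_trans hi hrR)).
have hN : N = size M by rewrite /N /card_set undup_id // uniq_fractal.
have hNle : (N <= \prod_(i < r) card_set (Gs i))%N by rewrite hN; apply: size_fractal_le.
have D0 : (0%R : int) \in D by apply: (coarray0 (fractal0 h0)).
have [p hp] := Pprod_odd Gs r.
have hpl : (p <= ula_rad D)%N.
  apply: ula_rad_ge; first exact: undup_uniq.
  apply/ula_okP => j hj; apply: main_mem => //; rewrite hp; lia.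
have hDU : (card_set U <= card_set D)%N by apply: card_central_le.
have hUP : (P <= card_set U)%N by rewrite /U card_central /P hp; lia.
split => //.
- move=> k hk; rewrite /U /central_ula mem_segment.
  rewrite /P hp in hk; lia.
- move=> F c hc hc2.
  have hPD : ((P%:R : F) <= (card_set D)%:R)%R by rewrite ler_nat; lia.
  apply: le_trans hPD.
  rewrite /P /Pprod natr_prod.
  apply: (@le_trans _ _ (\prod_(i < r) (c * ((card_set (Gs i)) ^ 2)%:R))%R); last first.
    apply: ler_prod => i _; apply/andP; split.
      by apply: mulr_ge0; [apply: ltW | apply: ler0n].
    by apply: hc2; exact: leq_trans (ltn_ord i) hrR.
  rewrite big_split /= prodr_const card_ord.
  apply: ler_wpM2l; first by apply: exprn_ge0; apply: ltW.
  rewrite -natr_prod ler_nat.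
  have -> : (\prod_(i < r) card_set (Gs i) ^ 2 = (\prod_(i < r) card_set (Gs i)) ^ 2)%N.
    by rewrite !expnS expn0 !muln1 big_split.
  by rewrite leq_exp2r.
Qed.
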